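(* Let $A\in\mathbb{C}^{n\times n}$, and fix $A^-\in A\{1\}$ and $A^{GD}\in A\{GD\}$. For $X\in\mathbb{C}^{n\times n}$ the following are equivalent: (i) $X = A^{-}AA^{GD}$; (ii) $XA=A^{-}A$ and $N(X)=N(AA^{GD})$; (iii) $XAA^{-}=A^{-}AA^{-}$ and $N(X)=N(AA^{GD})$.
   Context: For $A\in\mathbb{C}^{n\times n}$, $ind(A)$ is the smallest nonnegative integer $k$ with $\mathrm{rank}(A^k)=\mathrm{rank}(A^{k+1})$. $A\{1\}$ is the set of matrices $X$ with $AXA=A$. With $k=ind(A)$, $A\{GD\}$ is the set of G-Drazin inverses of $A$: matrices $X$ with $AXA=A$, $XA^{k+1}=A^k$, $A^{k+1}X=A^k$. $N(\cdot)$ denotes null space. *)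

(* Defs.v *)
From HB Require Import structures.
From mathcomp Require Import all_boot all_algebra.
From mathcomp Require Import complex.
From mathcomp Require Import reals.
Set Implicit Arguments. Unset Strict Implicit. Unset Printing Implicit Defensive.
Import GRing.Theory.
Local Open Scope ring_scope.

(* Complex n x n matrices are 'M[R[i]]_n with R : realType (R[i] = C). *)

Definition is_index {F : fieldType} {n : nat} (A : 'M[F]_n) (k : nat) : Prop :=
  \rank (A ^+ k) = \rank (A ^+ k.+1) /\
  (forall j : nat, (j < k)%N -> \rank (A ^+ j) <> \rank (A ^+ j.+1)).

Definition inner_inverse {F : fieldType} {n : nat} (A X : 'M[F]_n) : Prop :=
  A *m X *m A = A.

Definition GD_inverse {F : fieldType} {n : nat} (k : nat) (A X : 'M[F]_n) : Prop :=
  A *m X *m A = A /\ X *m A ^+ k.+1 = A ^+ k /\ A ^+ k.+1 *m X = A ^+ k.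

Definition nullsp {F : fieldType} {n : nat} (M : 'M[F]_n) : 'cV[F]_n -> Prop :=
  fun v => M *m v = 0.

Definition same_nullsp {F : fieldType} {n : nat} (M N : 'M[F]_n) : Prop :=
  forall v : 'cV[F]_n, nullsp M v <-> nullsp N v.

(* Main.v *)
Require Import Defs.
From HB Require Import structures.
From mathcomp Require Import all_boot all_algebra.
From mathcomp Require Import complex.
From mathcomp Require Import reals.
Local Open Scope ring_scope.
Import GRing.Theory.

Lemma mx_ext0 (F : fieldType) (n : nat) (M : 'M[F]_n) :
  (forall v : 'cV[F]_n, M *m v = 0) -> M = 0.
Proof.
move=> H; apply/matrixP => i j.
have := H (delta_mx j 0); rewrite -colE => /matrixP/(_ i 0).
by rewrite !mxE.
Qed.

Theorem theorem3p6 (R : realType) (n : nat) (A Am Agd X : 'M[R[i]]_n) (k : nat) :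
  is_index A k ->
  inner_inverse A Am ->
  GD_inverse k A Agd ->
  [<-> X = Am *m A *m Agd;
       X *m A = Am *m A /\ same_nullsp X (A *m Agd);
       X *m A *m Am = Am *m A *m Am /\ same_nullsp X (A *m Agd)].
Proof.
move=> _ HAm [HG _].
rewrite /inner_inverse in HAm.
have HG' : A *m (Agd *m A) = A by rewrite mulmxA.
have HAm' : A *m (Am *m A) = A by rewrite mulmxA.
tfae.
- move=> ->; split; first by rewrite -!mulmxA HG'.
  move=> v; rewrite /nullsp; split.
    move=> Hv; have := congr1 (mulmx A) Hv.
    by rewrite mulmx0 !mulmxA HAm.
  by move=> Hv; rewrite -!mulmxA (mulmxA A) Hv mulmx0.
- by move=> [H1 H2]; split=> //; rewrite H1.
- move=> [H1 H2].
  have XA : X *m A = Am *m A.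
    by have := congr1 (mulmx^~ A) H1; rewrite -!mulmxA HAm'.
  have E : X *m (1%:M - A *m Agd) = 0.
    apply: mx_ext0 => v; rewrite -mulmxA; apply/H2; rewrite /nullsp.
    have P2 : A *m Agd *m (A *m Agd) = A *m Agd by rewrite mulmxA HG.
    by rewrite mulmxA mulmxBr mulmx1 P2 subrr mul0mx.
  have E2 : X = X *m (A *m Agd).
    by move: E; rewrite mulmxBr mulmx1; apply: subr0_eq.
  by rewrite E2 mulmxA XA -mulmxA.
Qed.
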